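(* Let $n\ge1$ and $T\in M_n(\mathcal L_K)$, regarded as an operator on $\mathbb C^n\otimes\ell_2(F_\infty)$. Put $$a(T)=\sup\{\|Tq\|_2: q\in\mathbb C^n\otimes\mathcal L^2_\alpha,\ \|q\|_2\le1\},\qquad b(T)=\sup\{\|T^*(b\otimes\delta_{1})\|_2: b\in\mathbb C^n,\ \|b\|_2\le1\},$$ where $\mathcal L^2_\alpha=\mathrm{span}\{\delta_x:x\in F_\alpha\}$ and $\delta_1$ is the basis vector of the identity element. Then $$\max\{a(T),b(T)\}\le\|T\|\le a(T)+b(T).$$
   Context: Let $F_\infty$ be the free group with free generators split into two infinite families $\alpha_1,\alpha_2,\dots$ and $e_1,e_2,\dots$; $F_\alpha$ is the subgroup generated by the $\alpha_i$, and $K=\bigcup_{j\ge1}e_jF_\alpha$. $\ell_2(F_\infty)$ has orthonormal basis $\{\delta_x\}$, $\lambda(x)\delta_y=\delta_{xy}$, and $\mathcal L_K=\mathrm{span}\{\lambda(x):x\in K\}$ (finite linear combinations). $M_n(\mathcal L_K)=M_n\otimes\mathcal L_K$ acts on $\mathbb C^n\otimes\ell_2(F_\infty)$ and $\|T\|$ is its operator norm. *)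

(* Defs.v *)
From HB Require Import structures.
From mathcomp Require Import all_boot all_order all_algebra.
From mathcomp Require Import complex.
From mathcomp Require Import boolp classical_sets reals.

Set Implicit Arguments.
Unset Strict Implicit.
Unset Printing Implicit Defensive.

Import Order.TTheory GRing.Theory Num.Theory.
Local Open Scope ring_scope.

(* The free group F_oo on generators alpha_1, alpha_2, ... (encoded   *)
(* as [inl i] for alpha_(i+1)) and e_1, e_2, ... (encoded as [inr j]  *)
(* for e_(j+1)).  A letter is a generator together with a flag telling *)
(* whether it is the inverse of that generator.  Elements of the free  *)
(* group are reduced words.                                            *)

Definition Letter := ((nat + nat) * bool)%type.

Definition flip (a : Letter) : Letter := (a.1, ~~ a.2).

Definition reduced (w : seq Letter) : bool :=
  sorted (fun a b => b != flip a) w.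

Definition cons_red (a : Letter) (w : seq Letter) : seq Letter :=
  if w is b :: w' then (if b == flip a then w' else a :: w) else [:: a].

Definition red (w : seq Letter) : seq Letter := foldr cons_red [::] w.

Lemma cons_red_reduced a w : reduced w -> reduced (cons_red a w).
Proof.
case: w => [|b w] //= Hw.
case: ifP => Hb; first by case: w Hw {Hb} => //= c w /andP [].
by rewrite /reduced /= Hw Hb.
Qed.

Lemma red_reduced w : reduced (red w).
Proof. by elim: w => [|a w IH] //=; apply: cons_red_reduced. Qed.

Definition FG := {w : seq Letter | reduced w}.

Definition oneFG : FG := exist _ [::] isT.
Definition mulFG (x y : FG) : FG :=
  exist _ (red (sval x ++ sval y)) (red_reduced _).
(* the inverse word is already reduced; [red] is applied only to carry
   the reducedness proof *)
Definition invFG (x : FG) : FG :=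
  exist _ (red (rev (map flip (sval x)))) (red_reduced _).

Definition gen_alpha (i : nat) : FG := exist _ [:: (inl i, false)] isT.
Definition gen_e (j : nat) : FG := exist _ [:: (inr j, false)] isT.

(* F_alpha: the subgroup generated by the alpha_i, i.e. reduced words
   all of whose letters are alpha-letters *)
Definition inFalpha (x : FG) : bool := all (fun a : Letter => if a.1 is inl _ then true else false) (sval x).

Definition inK (x : FG) : Prop :=
  exists (j : nat) (w : FG), inFalpha w /\ x = mulFG (gen_e j) w.

(* An element of L_K = span{lambda(x) : x in K} is given as a finite   *)
(* formal linear combination  sum_k c_k lambda(x_k)  (a list of pairs  *)
(* (c_k, x_k)) with all x_k in K.                                      *)
(* Vectors of C^n (x) l_2(F_oo) are functions 'I_n -> FG -> C; we only *)
(* use finitely supported ones (a dense subspace).                     *)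

Section Ops.
Variable R : realType.
Local Notation C := (R[i]).

Definition lincomb := seq (C * FG).

Definition in_LK (a : lincomb) : Prop := forall p, p \in a -> inK p.2.

(* (lambda(x) f)(y) = f(x^{-1} y), so lambda(x) delta_z = delta_(x z) *)
Definition lam_act (a : lincomb) (f : FG -> C) : FG -> C :=
  fun y => \sum_(p <- a) p.1 * f (mulFG (invFG p.2) y).

Definition mx_act n (T : 'M[lincomb]_n) (q : 'I_n -> FG -> C) : 'I_n -> FG -> C :=
  fun i y => \sum_(j < n) lam_act (T i j) (q j) y.

(* adjoint: (T^* )_(ij) = (T_(ji))^*,  (c lambda(x))^* = conj(c) lambda(x^{-1}) *)
Definition mx_adj n (T : 'M[lincomb]_n) : 'M[lincomb]_n :=
  \matrix_(i, j) map (fun p : C * FG => (conjc p.1, invFG p.2)) (T j i).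

Definition supported n (q : 'I_n -> FG -> C) (s : seq FG) : Prop :=
  forall i y, y \notin s -> q i y = 0.

Definition l2norm n (q : 'I_n -> FG -> C) (s : seq FG) : R :=
  Num.sqrt (\sum_(i < n) \sum_(y <- undup s) ComplexField.Normc.normc (q i y) ^+ 2).

(* operator norm, computed on the dense subspace of finitely supported
   vectors *)
Definition opnorm n (T : 'M[lincomb]_n) : R :=
  sup [set r | exists (q : 'I_n -> FG -> C) (s s' : seq FG),
    [/\ supported q s, supported (mx_act T q) s', l2norm q s <= 1
      & r = l2norm (mx_act T q) s']].

Definition aT n (T : 'M[lincomb]_n) : R :=
  sup [set r | exists (q : 'I_n -> FG -> C) (s s' : seq FG),
    [/\ all inFalpha s, supported q s, supported (mx_act T q) s',
        l2norm q s <= 1 & r = l2norm (mx_act T q) s']].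

Definition vec_delta1 n (b : 'I_n -> C) : 'I_n -> FG -> C :=
  fun i y => if y == oneFG then b i else 0.

Definition bT n (T : 'M[lincomb]_n) : R :=
  sup [set r | exists (b : 'I_n -> C) (s' : seq FG),
    [/\ Num.sqrt (\sum_(i < n) ComplexField.Normc.normc (b i) ^+ 2) <= 1,
        supported (mx_act (mx_adj T) (vec_delta1 b)) s'
      & r = l2norm (mx_act (mx_adj T) (vec_delta1 b)) s']].

End Ops.

(* Main.v *)
Require Import Defs.
From mathcomp Require Import all_boot all_order all_algebra.
From mathcomp Require Import complex.
From mathcomp Require Import boolp classical_sets reals.
From mathcomp Require Import ring lra.
Import Order.TTheory GRing.Theory Num.Theory.
Set Implicit Arguments.
Unset Strict Implicit.
Unset Printing Implicit Defensive.
Lemma flipK : involutive flip.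
Proof. by case=> a b; rewrite /flip /= negbK. Qed.

Lemma flip_eq a b : (b == flip a) = (a == flip b).
Proof. by apply/eqP/eqP => ->; rewrite flipK. Qed.

Lemma reduced_cons a w : reduced (a :: w) = (if w is b :: _ then b != flip a else true) && reduced w.
Proof. by case: w => [|b w] //=. Qed.

Lemma red_id w : reduced w -> red w = w.
Proof.
elim: w => [|a w IH] // Hw.
move: Hw; rewrite reduced_cons => /andP [Hab Hw] /=.
rewrite IH //; case: w Hab {IH Hw} => [|b w] //= Hb.
by rewrite (negbTE Hb).
Qed.

Lemma cons_red_cancel a z : reduced z -> cons_red a (cons_red (flip a) z) = z.
Proof.
case: z => [|b z]; first by rewrite /= eqxx.
rewrite reduced_cons => /andP [Hb Hz] /=.
case: ifP => [/eqP Hba|Hba]; last by rewrite /= eqxx.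
rewrite flipK in Hba; subst b.
case: z Hb Hz => [|c z] //= Hc _; by rewrite (negbTE Hc).
Qed.

Lemma foldr_red_reduced z u : reduced z -> reduced (foldr cons_red z u).
Proof. by move=> Hz; elim: u => [|a u IH] //=; apply: cons_red_reduced. Qed.

Lemma foldr_cons_red z a x : reduced z ->
  foldr cons_red z (cons_red a x) = cons_red a (foldr cons_red z x).
Proof.
move=> Hz; case: x => [|b x] //=.
case: ifP => [/eqP ->|_] //=.
by rewrite cons_red_cancel // foldr_red_reduced.
Qed.

Lemma foldr_red z u : reduced z -> foldr cons_red z (red u) = foldr cons_red z u.
Proof.
move=> Hz; elim: u => [|a u IH] //=.
by rewrite foldr_cons_red // IH.
Qed.

Lemma redL u v : red (red u ++ v) = red (u ++ v).
Proof. by rewrite /red !foldr_cat foldr_red // red_reduced. Qed.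

Lemma redR u v : red (u ++ red v) = red (u ++ v).
Proof. by rewrite /red !foldr_cat -!/(red _) (red_id (red_reduced v)). Qed.

Lemma FG_eq (x y : FG) : sval x = sval y -> x = y.
Proof. by move=> H; apply: val_inj. Qed.

Lemma mulFGA (x y z : FG) : mulFG (mulFG x y) z = mulFG x (mulFG y z).
Proof. by apply: FG_eq => /=; rewrite redL redR catA. Qed.

Lemma mul1FG x : mulFG oneFG x = x.
Proof. by apply: FG_eq => /=; rewrite red_id //; case: x. Qed.

Lemma mulFG1 x : mulFG x oneFG = x.
Proof. by apply: FG_eq => /=; rewrite cats0 red_id //; case: x. Qed.

Lemma red_flip2 p a u : red (p ++ flip a :: a :: u) = red (p ++ u).
Proof.
rewrite /red !foldr_cat /=.
have := cons_red_cancel (flip a) (red_reduced u); rewrite flipK => H.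
by rewrite -/(red u) H.
Qed.

Lemma red_invl u : red (rev (map flip u) ++ u) = [::].
Proof.
elim: u => [|a u IH] //=.
by rewrite rev_cons -cats1 -catA /= red_flip2.
Qed.

Lemma revflipK : involutive (fun u : seq Letter => rev (map flip u)).
Proof. by move=> u; rewrite map_rev revK -map_comp (eq_map flipK) map_id. Qed.

Lemma mulVFG x : mulFG (invFG x) x = oneFG.
Proof. by apply: FG_eq => /=; rewrite redL red_invl. Qed.

Lemma mulFGV x : mulFG x (invFG x) = oneFG.
Proof.
apply: FG_eq => /=; rewrite redR.
by rewrite -{1}(revflipK (sval x)) red_invl.
Qed.

Lemma mulKFG x y : mulFG (invFG x) (mulFG x y) = y.
Proof. by rewrite -mulFGA mulVFG mul1FG. Qed.

Lemma mulKVFG x y : mulFG x (mulFG (invFG x) y) = y.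
Proof. by rewrite -mulFGA mulFGV mul1FG. Qed.

Lemma mulFG_inj x : injective (mulFG x).
Proof. by move=> y z H; rewrite -(mulKFG x y) H mulKFG. Qed.

Lemma invFGK : involutive invFG.
Proof.
move=> x; apply: (@mulFG_inj (invFG x)).
by rewrite mulVFG mulFGV.
Qed.

Lemma mulFG_eq1 x y : (mulFG x y == oneFG) = (y == invFG x).
Proof.
apply/eqP/eqP => [H|->]; last by rewrite mulFGV.
by rewrite -(mulKFG x y) H mulFG1.
Qed.
Definition isA (a : Letter) : bool := if a.1 is inl _ then true else false.

Lemma isA_flip a : isA (flip a) = isA a.
Proof. by case: a. Qed.

Fixpoint pre (w : seq Letter) : seq Letter :=
  if w is a :: w' then (if isA a then a :: pre w' else [::]) else [::].
Fixpoint tl (w : seq Letter) : seq Letter :=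
  if w is a :: w' then (if isA a then tl w' else w) else [::].

Definition tshape (w : seq Letter) : bool := if w is b :: _ then ~~ isA b else true.

Lemma pre_tl w : pre w ++ tl w = w.
Proof. by elim: w => [|a w IH] //=; case: ifP => //= _; rewrite IH. Qed.

Lemma all_pre w : all isA (pre w).
Proof. by elim: w => [|a w IH] //=; case: ifP => //= ->. Qed.

Lemma tshape_tl w : tshape (tl w).
Proof. by elim: w => [|a w IH] //=; case: ifP => //= ->. Qed.

Lemma pre_cat u v : all isA u -> tshape v -> pre (u ++ v) = u.
Proof.
elim: u => [|a u IH] /=; first by move=> _; case: v => [|b v] //= /negbTE ->.
by case/andP => -> Hu Hv; rewrite IH.
Qed.

Lemma tl_cat u v : all isA u -> tshape v -> tl (u ++ v) = v.
Proof.
elim: u => [|a u IH] /=; first by move=> _; case: v => [|b v] //= /negbTE ->.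
by case/andP => -> Hu Hv; rewrite IH.
Qed.

Lemma reduced_catP u v : reduced (u ++ v) =
  [&& reduced u, reduced v &
     (if u is x :: u' then (if v is y :: _ then y != flip (last x u') else true) else true)].
Proof.
case: u => [|x u] /=; first by rewrite andbT.
rewrite /reduced /= cat_path; case: v => [|y v] /=; first by rewrite !andbT.
by case: (path _ x u); case: (path _ y v); case: (y != _).
Qed.

Lemma reduced_catl u v : reduced (u ++ v) -> reduced u.
Proof. by rewrite reduced_catP => /and3P []. Qed.
Lemma reduced_catr u v : reduced (u ++ v) -> reduced v.
Proof. by rewrite reduced_catP => /and3P []. Qed.

Lemma reduced_catA u v : all isA u -> reduced u -> reduced v -> tshape v -> reduced (u ++ v).
Proof.
move=> Au Ru Rv Tv; rewrite reduced_catP Ru Rv /=.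
case: u Au {Ru} => [|x u] // Au; case: v Tv {Rv} => [|y v] //= Ty.
apply: contra Ty => /eqP ->; rewrite isA_flip.
have: last x u \in x :: u by rewrite mem_last.
by move/(allP Au).
Qed.

Lemma reduced_pre w : reduced w -> reduced (pre w).
Proof. by rewrite -{1}(pre_tl w); apply: reduced_catl. Qed.
Lemma reduced_tl w : reduced w -> reduced (tl w).
Proof. by rewrite -{1}(pre_tl w); apply: reduced_catr. Qed.

Definition preFG (y : FG) : FG := exist _ (pre (sval y)) (reduced_pre (svalP y)).
Definition tlFG (y : FG) : FG := exist _ (tl (sval y)) (reduced_tl (svalP y)).

Lemma mem_cons_red a r x : x \in cons_red a r -> (x == a) || (x \in r).
Proof.
case: r => [|b r] /=; first by rewrite mem_seq1 => ->.
case: ifP => _; first by move=> H; rewrite inE H !orbT.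
by [].
Qed.

Lemma sub_red w : {subset red w <= w}.
Proof.
elim: w => [|a w IH] //= x /mem_cons_red /orP [/eqP ->|/IH H]; rewrite inE ?eqxx //.
by rewrite H orbT.
Qed.

Lemma all_red (P : pred Letter) w : all P w -> all P (red w).
Proof. by move=> /allP H; apply/allP => x /sub_red /H. Qed.

Lemma reduced_revflip w : reduced w -> reduced (rev (map flip w)).
Proof.
elim: w => [|a w IH] // Hw.
move: Hw; rewrite reduced_cons => /andP [Hab Hw].
rewrite /= rev_cons -cats1 reduced_catP IH //=.
case: w Hab {IH Hw} => [|b w] //= Hb.
rewrite rev_cons; case: (rev _) => [|x r] /=; last rewrite last_rcons.
  by rewrite flipK eq_sym.
by rewrite flipK eq_sym.
Qed.

Lemma inFalpha_red w : all isA w -> inFalpha (exist _ (red w) (red_reduced w)).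
Proof. by move=> H; apply: all_red. Qed.

Definition eL (j : nat) : Letter := (inr j, false).

Lemma inK_word x : inK x -> exists j u,
  [/\ all isA u, reduced u, sval x = eL j :: u &
      sval (invFG x) = rev (map flip u) ++ [:: flip (eL j)]].
Proof.
case=> j [w [Hw ->]]; exists j, (sval w).
have Rw := svalP w.
have Hx : red (eL j :: sval w) = eL j :: sval w.
  apply: red_id; rewrite reduced_cons Rw andbT.
  move: Hw; rewrite /inFalpha; case: (sval w) => [|b u] //= /andP [Hb _].
  by apply: contraL Hb => /eqP ->.
split => //=.
change (inr j, false) with (eL j); rewrite (red_id Rw).
have -> : cons_red (eL j) (sval w) = eL j :: sval w by rewrite -[RHS]Hx /= (red_id Rw).
rewrite /= rev_cons -cats1 red_id //.
apply: reduced_catA.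
- by rewrite all_rev all_map; apply/allP => a Ha /=; rewrite isA_flip; apply: (allP Hw).
- exact: reduced_revflip.
- by [].
- by [].
Qed.
Definition shapeC (y g : FG) : bool :=
  if tl (sval y) is [:: b] then (~~ isA b) && (ohead (sval g) != Some (flip b)) else false.

Lemma shapeC_word y g : shapeC y g ->
  exists b, [/\ ~~ isA b, ohead (sval g) != Some (flip b) & sval y = pre (sval y) ++ [:: b]].
Proof.
rewrite /shapeC; have := pre_tl (sval y).
case: (tl (sval y)) => [|b [|c r]] // H /andP [Hb Hg].
by exists b; split.
Qed.

Lemma mulFG_cat (y g : FG) : reduced (sval y ++ sval g) -> sval (mulFG y g) = sval y ++ sval g.
Proof. by move=> H; rewrite /= red_id. Qed.

Lemma reduced_cat1 u b v : reduced (rcons u b) -> reduced v -> ohead v != Some (flip b) ->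
  reduced (rcons u b ++ v).
Proof.
move=> H1 H2 H3; rewrite reduced_catP H1 H2 /=.
case: u {H1} => [|x u] /=; case: v {H2} H3 => [|c v] //= H3; try rewrite last_rcons;
  by apply: contra H3 => /eqP ->.
Qed.

Lemma shapeC_mul y g : shapeC y g -> sval (mulFG y g) = sval y ++ sval g.
Proof.
case/shapeC_word => b [Hb Hg Hy]; apply: mulFG_cat.
rewrite Hy cats1; apply: (reduced_cat1 _ (svalP g) Hg).
by rewrite -cats1 -Hy (svalP y).
Qed.

Lemma shapeC_inj y g y' g' : shapeC y g -> shapeC y' g' -> mulFG y g = mulFG y' g' ->
  y = y' /\ g = g'.
Proof.
move=> H1 H2 /(congr1 sval); rewrite (shapeC_mul H1) (shapeC_mul H2).
case/shapeC_word: H1 => b [Hb _ Hy]; case/shapeC_word: H2 => b' [Hb' _ Hy'].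
rewrite Hy Hy' -!catA /= => E.
have Ep : pre (sval y) = pre (sval y').
  have := congr1 pre E.
  by rewrite !pre_cat ?all_pre //= ?Hb ?Hb'.
move: E; rewrite Ep => /(congr1 (drop (size (pre (sval y'))))).
rewrite !drop_size_cat // => -[Eb Eg]; subst b'.
split; apply: FG_eq => //.
by rewrite Hy Hy' Ep.
Qed.

Lemma inK_shapeC x g : inK x -> shapeC (invFG x) g = (ohead (sval g) != ohead (sval x)).
Proof.
case/inK_word => j [u [Au Ru Ex Ei]].
rewrite /shapeC Ei tl_cat //=; last by rewrite all_rev all_map; apply/allP => a Ha /=; rewrite isA_flip; apply: (allP Au).
by rewrite flipK Ex.
Qed.

Definition hNw (g : seq Letter) := if g is a :: r then a :: pre r else [::].
Definition tNw (g : seq Letter) := if g is a :: r then tl r else [::].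

Lemma hN_tN g : hNw g ++ tNw g = g.
Proof. by case: g => [|a r] //=; rewrite pre_tl. Qed.

Lemma reduced_hN (g : FG) : reduced (hNw (sval g)).
Proof. by apply: (@reduced_catl _ (tNw (sval g))); rewrite hN_tN (svalP g). Qed.
Lemma reduced_tN (g : FG) : reduced (tNw (sval g)).
Proof. by apply: (@reduced_catr (hNw (sval g))); rewrite hN_tN (svalP g). Qed.

Definition hN (g : FG) : FG := exist (fun w => reduced w) (hNw (sval g)) (reduced_hN g).
Definition tN (g : FG) : FG := exist (fun w => reduced w) (tNw (sval g)) (reduced_tN g).

Lemma hN_tN_mul g : mulFG (hN g) (tN g) = g.
Proof. by apply: FG_eq; rewrite /= hN_tN red_id // (svalP g). Qed.

Lemma tshape_tN g : tshape (sval (tN g)).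
Proof. by case: g => [[|a r] ?] //=; apply: tshape_tl. Qed.
Lemma tshape_tlFG g : tshape (sval (tlFG g)).
Proof. exact: tshape_tl. Qed.

Lemma mul_alpha_tail (v t : FG) : inFalpha v -> tshape (sval t) ->
  preFG (mulFG v t) = v /\ tlFG (mulFG v t) = t.
Proof.
move=> Hv Ht.
have E : sval (mulFG v t) = sval v ++ sval t.
  by apply: mulFG_cat; apply: (reduced_catA Hv (svalP v) (svalP t) Ht).
split; apply: FG_eq.
  by change (pre (sval (mulFG v t)) = sval v); rewrite E pre_cat.
by change (tl (sval (mulFG v t)) = sval t); rewrite E tl_cat.
Qed.

Lemma alpha_inv_hN x g k : inK x -> ohead (sval g) = Some (eL k) ->
  inFalpha (mulFG (invFG x) (hN g)) = (ohead (sval g) == ohead (sval x)).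
Proof.
case/inK_word => j [u [Au Ru Ex Ei]].
case: g => [[|a r] Rg] //= [Ea]; subst a.
rewrite Ex /=.
rewrite /inFalpha; change (all isA (red (sval (invFG x) ++ eL k :: pre r)) = (Some (eL k) == Some (eL j))).
rewrite Ei -catA /=.
have [<-|Hjk] := eqVneq j k.
  rewrite eqxx red_flip2; apply: all_red; rewrite all_cat all_pre andbT.
  by rewrite all_rev all_map; apply/allP => a Ha /=; rewrite isA_flip; apply: (allP Au).
have -> : (Some (eL k) == Some (eL j)) = false.
  by apply/eqP => [[]] /eqP; rewrite eq_sym (negbTE Hjk).
rewrite red_id.
  by apply/negP => /allP /(_ (flip (eL j))); rewrite mem_cat mem_head orbT => /(_ isT).
have R1 : reduced (rcons (rev [seq flip i | i <- u]) (flip (eL j))).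
  by rewrite -cats1 -Ei (svalP (invFG x)).
have R2 : reduced (eL k :: pre r) by apply: (reduced_hN (exist _ (eL k :: r) Rg)).
rewrite -cat_rcons; apply: reduced_cat1 => //=; rewrite flipK.
by apply/eqP => -[] /eqP; rewrite eq_sym (negbTE Hjk).
Qed.
Local Open Scope ring_scope.

Section Analysis.
Variable R : realType.
Local Notation C := (R[i]).
Local Notation nc := (@ComplexField.Normc.normc R).

Lemma nc_ge0 (z : C) : 0 <= nc z.
Proof. by case: z => a b; apply: sqrtr_ge0. Qed.

Lemma nc2 (a b : R) : nc (a +i* b)%C ^+ 2 = a ^+ 2 + b ^+ 2.
Proof. by rewrite /= sqr_sqrtr // addr_ge0 // sqr_ge0. Qed.

Lemma nc_conj (z : C) : nc (z^*)%C = nc z.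
Proof. by case: z => a b /=; rewrite sqrrN. Qed.

Lemma nc_real (k : R) : nc (k%:C)%C = `|k|.
Proof. by rewrite /= expr0n /= addr0 sqrtr_sqr. Qed.

Lemma mul_conj (z : C) : z * (z^*)%C = ((nc z ^+ 2)%:C)%C.
Proof.
case: z => a b; rewrite nc2 /=.
simpc; rewrite [b * a]mulrC addNr -!expr2.
by apply/eqP; rewrite eq_complex /= !eqxx.
Qed.

Lemma nc_sum (I : Type) (L : seq I) (F : I -> C) : nc (\sum_(i <- L) F i) <= \sum_(i <- L) nc (F i).
Proof.
elim: L => [|a L IH]; first by rewrite !big_nil ComplexField.Normc.normc0.
rewrite !big_cons; apply: le_trans (le_normcD _ _) _.
by rewrite lerD2l.
Qed.

Lemma nc_eq0 (z : C) : (nc z == 0) = (z == 0).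
Proof.
apply/eqP/eqP => [/ComplexField.Normc.eq0_normc //|->].
exact: ComplexField.Normc.normc0.
Qed.

Lemma sqr_nc_eq0 (z : C) : (nc z ^+ 2 == 0) = (z == 0).
Proof. by rewrite sqrf_eq0 nc_eq0. Qed.

Lemma sum_filter_nz (I : eqType) (L : seq I) (f : I -> R) :
  \sum_(x <- L) f x = \sum_(x <- filter (fun x => f x != 0) L) f x.
Proof.
rewrite big_filter [RHS]big_mkcond /=; apply: eq_bigr => x _.
by case: eqP.
Qed.

Lemma sum_sub (I : eqType) (l1 l2 : seq I) (f : I -> R) :
  uniq l1 -> uniq l2 -> {subset l1 <= l2} -> (forall x, 0 <= f x) ->
  \sum_(x <- l1) f x <= \sum_(x <- l2) f x.
Proof.
move=> U1 U2 S f0.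
rewrite [X in _ <= X](bigID (fun x => x \in l1)) /= -[X in X <= _]addr0; apply: lerD; last first.
  by apply: sumr_ge0.
have P : perm_eq [seq x <- l2 | x \in l1] l1.
  apply: uniq_perm => //; first exact: filter_uniq.
  by move=> x; rewrite mem_filter; case E: (x \in l1) => //=; rewrite (S _ E).
by rewrite -[X in _ <= X]big_filter (perm_big _ P).
Qed.

Lemma sum_supp_eq (I : eqType) (l1 l2 : seq I) (f : I -> R) :
  uniq l1 -> uniq l2 -> (forall x, f x != 0 -> (x \in l1) = (x \in l2)) ->
  \sum_(x <- l1) f x = \sum_(x <- l2) f x.
Proof.
move=> U1 U2 S; rewrite [LHS]sum_filter_nz [RHS]sum_filter_nz.
apply: perm_big; apply: uniq_perm; try exact: filter_uniq.
by move=> x; rewrite !mem_filter; case E: (f x != 0) => //=; rewrite (S _ E).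
Qed.

Lemma sum_inj (A B : eqType) (L : seq A) (M : seq B) (phi : A -> B) (F : A -> R) (f : B -> R) :
  uniq L -> uniq M -> (forall a, 0 <= F a) -> (forall b, 0 <= f b) ->
  (forall a, a \in L -> F a != 0 -> phi a \in M /\ F a <= f (phi a)) ->
  (forall a a', a \in L -> a' \in L -> F a != 0 -> F a' != 0 -> phi a = phi a' -> a = a') ->
  \sum_(a <- L) F a <= \sum_(b <- M) f b.
Proof.
move=> UL UM F0 f0 H Hi.
rewrite sum_filter_nz.
set L' := filter _ L.
have HL' a : a \in L' -> a \in L /\ F a != 0 by rewrite mem_filter => /andP [].
apply: (@le_trans _ _ (\sum_(a <- L') f (phi a))).
  by rewrite big_seq_cond [X in _ <= X]big_seq_cond; apply: ler_sum => a /andP [/HL' [aL Fa] _]; case: (H a aL Fa).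
rewrite -(big_map phi predT f); apply: sum_sub => //.
- rewrite map_inj_in_uniq ?filter_uniq // => a a' /HL' [aL Fa] /HL' [aL' Fa'].
  exact: Hi.
- by move=> b /mapP [a /HL' [aL Fa] ->]; case: (H a aL Fa).
Qed.

Lemma sum_pred1 (I : eqType) (Y : seq I) (c : I) (F : I -> C) :
  uniq Y -> c \in Y -> \sum_(y <- Y) (if y == c then F y else 0) = F c.
Proof.
move=> UY cY; rewrite (bigD1_seq c) //= eqxx big1 ?addr0 // => y /negbTE ->//.
Qed.

End Analysis.
Section Analysis2.
Variable R : realType.
Local Notation C := (R[i]).
Local Notation nc := (@ComplexField.Normc.normc R).

Lemma CS (I : eqType) (L : seq I) (x y : I -> R) :
  \sum_(i <- L) x i * y i <= Num.sqrt (\sum_(i <- L) x i ^+ 2) * Num.sqrt (\sum_(i <- L) y i ^+ 2).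
Proof.
set A := \sum_(i <- L) x i ^+ 2; set B := \sum_(i <- L) y i ^+ 2; set S := \sum_(i <- L) x i * y i.
have A0 : 0 <= A by apply: sumr_ge0 => i _; apply: sqr_ge0.
have B0 : 0 <= B by apply: sumr_ge0 => i _; apply: sqr_ge0.
suff H : S ^+ 2 <= A * B.
  rewrite -sqrtrM //; apply: le_trans (ler_norm S) _.
  by rewrite -sqrtr_sqr ler_sqrt // mulr_ge0.
have [B00|Bpos] := eqVneq B 0.
  have Hy : forall i, i \in L -> y i = 0.
    move=> i iL; move/eqP: B00; rewrite psumr_eq0; last by move=> j _; apply: sqr_ge0.
    by move/allP/(_ i iL) => /= /eqP /eqP; rewrite sqrf_eq0 => /eqP.
  have -> : S = 0.
    by rewrite /S big_seq big1 // => i iL; rewrite Hy // mulr0.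
  by rewrite expr0n /= B00 mulr0.
have Bp : 0 < B by rewrite lt_def Bpos B0.
have E : \sum_(i <- L) (B * x i - S * y i) ^+ 2 = B * (A * B - S ^+ 2).
  transitivity (\sum_(i <- L) (B ^+ 2 * x i ^+ 2 - (2 * B * S) * (x i * y i) + S ^+ 2 * y i ^+ 2)).
    by apply: eq_bigr => i _; ring.
  rewrite big_split sumrB /= -!mulr_sumr -/A -/B -/S; ring.
have : 0 <= B * (A * B - S ^+ 2) by rewrite -E; apply: sumr_ge0 => i _; apply: sqr_ge0.
by rewrite pmulr_rge0 // subr_ge0.
Qed.

Lemma CS2 n (I : eqType) (L : seq I) (x y : 'I_n -> I -> R) :
  \sum_(i < n) \sum_(j <- L) x i j * y i j <=
  Num.sqrt (\sum_(i < n) \sum_(j <- L) x i j ^+ 2) * Num.sqrt (\sum_(i < n) \sum_(j <- L) y i j ^+ 2).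
Proof.
have := CS [seq (i, j) | i <- index_enum 'I_n, j <- L] (fun p => x p.1 p.2) (fun p => y p.1 p.2).
by rewrite !big_allpairs.
Qed.

Definition ss n (q : 'I_n -> FG -> C) (L : seq FG) : R :=
  \sum_(i < n) \sum_(y <- L) nc (q i y) ^+ 2.

Lemma ss_ge0 n (q : 'I_n -> FG -> C) L : 0 <= ss q L.
Proof. by apply: sumr_ge0 => i _; apply: sumr_ge0 => y _; apply: sqr_ge0. Qed.

Lemma ssT n (q : 'I_n -> FG -> C) L : ss q L = \sum_(y <- L) \sum_(i < n) nc (q i y) ^+ 2.
Proof. by rewrite /ss exchange_big. Qed.

Lemma l2normE n (q : 'I_n -> FG -> C) s : l2norm q s = Num.sqrt (ss q (undup s)).
Proof. by []. Qed.

Lemma ss_supp n (q : 'I_n -> FG -> C) s1 s2 :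
  supported q s1 -> supported q s2 -> ss q (undup s1) = ss q (undup s2).
Proof.
move=> H1 H2; rewrite !ssT; apply: sum_supp_eq; try exact: undup_uniq.
move=> y Hy; rewrite !mem_undup.
have [i Hi] : exists i, q i y != 0.
  apply/existsP; apply: contraR Hy; rewrite negb_exists => /forallP H.
  by rewrite big1 // => i _; move: (H i); rewrite negbK => /eqP ->; rewrite ComplexField.Normc.normc0 expr0n.
case E1: (y \in s1); case E2: (y \in s2) => //.
  by move: Hi; rewrite H2 ?E2 ?eqxx.
by move: Hi; rewrite H1 ?E1 ?eqxx.
Qed.

Lemma minkowski n (u v w : 'I_n -> FG -> C) L :
  (forall i y, w i y = u i y + v i y) ->
  Num.sqrt (ss w L) <= Num.sqrt (ss u L) + Num.sqrt (ss v L).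
Proof.
move=> Hw.
have su0 := sqrtr_ge0 (ss u L); have sv0 := sqrtr_ge0 (ss v L).
rewrite -(ger0_norm (addr_ge0 su0 sv0)) -sqrtr_sqr ler_sqrt ?sqr_ge0 //.
apply: (@le_trans _ _ (\sum_(i < n) \sum_(y <- L) (nc (u i y) + nc (v i y)) ^+ 2)).
  apply: ler_sum => i _; apply: ler_sum => y _; rewrite Hw.
  rewrite ler_sqr ?nnegrE ?nc_ge0 ?addr_ge0 ?nc_ge0 //; exact: le_normcD.
have E : \sum_(i < n) \sum_(y <- L) (nc (u i y) + nc (v i y)) ^+ 2 =
  ss u L + 2 * (\sum_(i < n) \sum_(y <- L) nc (u i y) * nc (v i y)) + ss v L.
  rewrite /ss mulr_sumr -!big_split /=; apply: eq_bigr => i _.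
  rewrite mulr_sumr -!big_split /=; apply: eq_bigr => y _; ring.
rewrite E sqrrD !sqr_sqrtr ?ss_ge0 // lerD2r lerD2l.
have := (CS2 L (fun i y => nc (u i y)) (fun i y => nc (v i y))); rewrite /ss /=.
lra.
Qed.

End Analysis2.
Section Ops3.
Variable R : realType.
Local Notation C := (R[i]).
Local Notation nc := (@ComplexField.Normc.normc R).

Definition terms n (T : 'M[lincomb R]_n) : seq (C * FG) :=
  flatten [seq T ij.1 ij.2 | ij <- [seq (i, j) | i <- index_enum 'I_n, j <- index_enum 'I_n]].

Lemma mem_terms n (T : 'M[lincomb R]_n) i j p : p \in T i j -> p \in terms T.
Proof.
move=> H; apply/flattenP; exists (T i j) => //.
apply/mapP; exists (i, j) => //.
by apply: (allpairs_f (fun i j => (i, j))); apply: mem_index_enum.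
Qed.

Definition suppT n (T : 'M[lincomb R]_n) (L : seq FG) : seq FG :=
  [seq mulFG p.2 y | p <- terms T, y <- L].

Lemma act_expand n (T : 'M[lincomb R]_n) q i g :
  mx_act T q i g = \sum_(j < n) \sum_(p <- T i j) p.1 * q j (mulFG (invFG p.2) g).
Proof. by []. Qed.

Lemma supp_act n (T : 'M[lincomb R]_n) q L : supported q L -> supported (mx_act T q) (suppT T L).
Proof.
move=> H i g gn; rewrite act_expand big1 // => j _; rewrite big1_seq // => p /andP [_ pT].
rewrite H ?mulr0 //; apply: contra gn => Hin.
rewrite -(mulKVFG p.2 g).
exact: (allpairs_f (fun p y => mulFG p.2 y) (mem_terms pT) Hin).
Qed.

Definition sc n (k : R) (q : 'I_n -> FG -> C) : 'I_n -> FG -> C := fun i y => (k%:C)%C * q i y.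

Lemma act_scale n (T : 'M[lincomb R]_n) k q i g : mx_act T (sc k q) i g = (k%:C)%C * mx_act T q i g.
Proof.
rewrite !act_expand mulr_sumr; apply: eq_bigr => j _.
rewrite mulr_sumr; apply: eq_bigr => p _; rewrite /sc; ring.
Qed.

Lemma nc_scale (k : R) (z : C) : nc ((k%:C)%C * z) ^+ 2 = k ^+ 2 * nc z ^+ 2.
Proof. by rewrite ComplexField.Normc.normcM nc_real exprMn real_normK // num_real. Qed.

Lemma ss_scale n k (q : 'I_n -> FG -> C) L : ss (sc k q) L = k ^+ 2 * ss q L.
Proof.
rewrite /ss mulr_sumr; apply: eq_bigr => i _.
by rewrite mulr_sumr; apply: eq_bigr => y _; rewrite /sc nc_scale.
Qed.

Lemma sqrt_scale (k X : R) : 0 <= k -> Num.sqrt (k ^+ 2 * X) = k * Num.sqrt X.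
Proof. by move=> k0; rewrite sqrtrM ?sqr_ge0 // sqrtr_sqr ger0_norm. Qed.

Lemma supported_scale n k (q : 'I_n -> FG -> C) L : supported q L -> supported (sc k q) L.
Proof. by move=> H i y yL; rewrite /sc H ?mulr0. Qed.

Lemma scale_gen (X : Type) (scf : R -> X -> X) (N1 N2 : X -> R) (P : X -> Prop) (A : R) :
  (forall x, 0 <= N1 x) ->
  (forall k x, 0 < k -> N1 (scf k x) = k * N1 x) ->
  (forall k x, 0 < k -> N2 (scf k x) = k * N2 x) ->
  (forall k x, 0 < k -> P x -> P (scf k x)) ->
  (forall x, P x -> N1 x <= 1 -> N2 x <= A) ->
  forall x, P x -> N2 x <= A * N1 x.
Proof.
move=> N10 H1 H2 HP HA x Px.
have [Z|nz] := eqVneq (N1 x) 0.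
  rewrite Z mulr0; rewrite leNgt; apply/negP => N2p.
  set k := (`|A| + 1) / N2 x.
  have kp : 0 < k by rewrite divr_gt0 // ltr_pwDr // normr_ge0.
  have := HA _ (HP _ _ kp Px); rewrite H1 // Z mulr0 ler01 H2 // => /(_ isT).
  rewrite /k divfK ?gt_eqF //; apply/negP; rewrite -ltNge.
  by apply: le_lt_trans (ler_norm A) _; rewrite ltrDl.
have N1p : 0 < N1 x by rewrite lt_def nz N10.
have ip : 0 < (N1 x)^-1 by rewrite invr_gt0.
have := HA _ (HP _ _ ip Px).
rewrite H1 // mulVf // lexx H2 // => /(_ isT) H.
by rewrite -[N2 x](mulVKf nz) [N1 x * _]mulrC ler_pM2r.
Qed.

End Ops3.
Section Crude.
Variable R : realType.
Local Notation C := (R[i]).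
Local Notation nc := (@ComplexField.Normc.normc R).

Lemma sum_ord_ge n (F : 'I_n -> R) j : (forall i, 0 <= F i) -> F j <= \sum_(i < n) F i.
Proof.
move=> F0; rewrite (bigD1 j) //= -[X in X <= _]addr0 lerD2l.
by apply: sumr_ge0.
Qed.

Lemma ss_row_le n (q : 'I_n -> FG -> C) j L : \sum_(y <- L) nc (q j y) ^+ 2 <= ss q L.
Proof.
rewrite /ss.
have := @sum_ord_ge n (fun i => \sum_(y <- L) nc (q i y) ^+ 2) j; apply.
by move=> i; apply: sumr_ge0 => y _; apply: sqr_ge0.
Qed.

Lemma translate_le n (q : 'I_n -> FG -> C) s L j (x : FG) :
  supported q s -> uniq L ->
  \sum_(g <- L) nc (q j (mulFG x g)) ^+ 2 <= \sum_(z <- undup s) nc (q j z) ^+ 2.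
Proof.
move=> Hs UL.
apply: (sum_inj (phi := mulFG x)) => //; try exact: undup_uniq.
- by move=> g; apply: sqr_ge0.
- by move=> g; apply: sqr_ge0.
- move=> g gL; rewrite sqr_nc_eq0 => H; split => //.
  by rewrite mem_undup; apply: contraR H => /Hs ->.
- by move=> g g' _ _ _ _ /mulFG_inj.
Qed.

Lemma crude n (T : 'M[lincomb R]_n) : exists M, 0 <= M /\
  forall q s L, supported q s -> uniq L -> ss (mx_act T q) L <= M * ss q (undup s).
Proof.
pose K i := \sum_(j < n) \sum_(p <- T i j) nc p.1 ^+ 2.
pose Sz i := (\sum_(j < n) size (T i j))%:R : R.
have K0 i : 0 <= K i by apply: sumr_ge0 => j _; apply: sumr_ge0 => p _; apply: sqr_ge0.
exists (\sum_(i < n) K i * Sz i); split.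
  by apply: sumr_ge0 => i _; apply: mulr_ge0.
move=> q s L Hs UL.
have A i g : nc (mx_act T q i g) ^+ 2 <=
    K i * \sum_(j < n) \sum_(p <- T i j) nc (q j (mulFG (invFG p.2) g)) ^+ 2.
  pose D := \sum_(j < n) \sum_(p <- T i j) nc p.1 * nc (q j (mulFG (invFG p.2) g)).
  have D0 : 0 <= D by apply: sumr_ge0 => j _; apply: sumr_ge0 => p _; apply: mulr_ge0; apply: nc_ge0.
  have H1 : nc (mx_act T q i g) <= D.
    rewrite act_expand; apply: le_trans (nc_sum _ _) _; apply: ler_sum => j _.
    apply: le_trans (nc_sum _ _) _; apply: ler_sum => p _.
    by rewrite ComplexField.Normc.normcM.
  apply: le_trans (_ : D ^+ 2 <= _).
    by rewrite ler_sqr ?nnegrE ?nc_ge0.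
  have := CS [seq (j, p) | j <- index_enum 'I_n, p <- T i j]
     (fun jp => nc jp.2.1) (fun jp => nc (q jp.1 (mulFG (invFG jp.2.2) g))).
  rewrite !big_allpairs_dep /= -/D => HD.
  set Q := \sum_(j < n) _.
  have Q0 : 0 <= Q by apply: sumr_ge0 => j _; apply: sumr_ge0 => p _; apply: sqr_ge0.
  rewrite -[K i](sqr_sqrtr (K0 i)) -[Q](sqr_sqrtr Q0) -exprMn.
  by rewrite ler_sqr ?nnegrE ?mulr_ge0 ?sqrtr_ge0.
rewrite /ss mulr_suml; apply: ler_sum => i _.
apply: le_trans (_ : \sum_(g <- L) K i * \sum_(j < n) \sum_(p <- T i j) nc (q j (mulFG (invFG p.2) g)) ^+ 2 <= _).
  by apply: ler_sum => g _; apply: A.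
rewrite -mulr_sumr -mulrA; apply: ler_wpM2l => //.
rewrite exchange_big /= /Sz natr_sum mulr_suml; apply: ler_sum => j _.
rewrite exchange_big /=.
rewrite -sum1_size natr_sum mulr_suml.
apply: ler_sum => p _; rewrite mul1r.
apply: le_trans (translate_le _ _ Hs UL) _.
exact: ss_row_le.
Qed.

End Crude.
Local Open Scope classical_set_scope.
Local Open Scope ring_scope.
Section Sets.
Variable R : realType.
Local Notation C := (R[i]).
Local Notation nc := (@ComplexField.Normc.normc R).

Lemma sqrt_le1 (X : R) : 0 <= X -> Num.sqrt X <= 1 -> X <= 1.
Proof. by move=> X0 H; rewrite -(sqr_sqrtr X0) -(expr1n _ 2) ler_sqr ?nnegrE ?sqrtr_ge0. Qed.

Lemma ub_crude n (T : 'M[lincomb R]_n) : exists B, forall q s s',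
  supported q s -> l2norm q s <= 1 -> l2norm (mx_act T q) s' <= B.
Proof.
have [M [M0 HM]] := crude T.
exists (Num.sqrt M) => q s s' Hs H1.
rewrite l2normE ler_sqrt //; apply: le_trans (HM _ _ _ Hs (undup_uniq _)) _.
rewrite -[X in _ <= X]mulr1; apply: ler_wpM2l => //.
by apply: sqrt_le1; [apply: ss_ge0|].
Qed.

Definition opset n (T : 'M[lincomb R]_n) := [set r | exists (q : 'I_n -> FG -> C) (s s' : seq FG),
    [/\ supported q s, supported (mx_act T q) s', l2norm q s <= 1
      & r = l2norm (mx_act T q) s']].
Definition aset n (T : 'M[lincomb R]_n) := [set r | exists (q : 'I_n -> FG -> C) (s s' : seq FG),
    [/\ all inFalpha s, supported q s, supported (mx_act T q) s',
        l2norm q s <= 1 & r = l2norm (mx_act T q) s']].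
Definition bset n (T : 'M[lincomb R]_n) := [set r | exists (b : 'I_n -> C) (s' : seq FG),
    [/\ Num.sqrt (\sum_(i < n) nc (b i) ^+ 2) <= 1,
        supported (mx_act (mx_adj T) (vec_delta1 b)) s'
      & r = l2norm (mx_act (mx_adj T) (vec_delta1 b)) s']].

Lemma opnormE n (T : 'M[lincomb R]_n) : opnorm T = sup (opset T). Proof. by []. Qed.
Lemma aTE n (T : 'M[lincomb R]_n) : aT T = sup (aset T). Proof. by []. Qed.
Lemma bTE n (T : 'M[lincomb R]_n) : bT T = sup (bset T). Proof. by []. Qed.

Lemma zero_vec_supp n (T : 'M[lincomb R]_n) :
  supported (fun (_ : 'I_n) (_ : FG) => 0 : C) [::] /\ supported (mx_act T (fun _ _ => 0)) [::].
Proof.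
split => // i y _; rewrite act_expand big1 // => j _; rewrite big1 // => p _; exact: mulr0.
Qed.

Lemma l2norm_nil n (q : 'I_n -> FG -> C) : l2norm q [::] = 0.
Proof. by rewrite l2normE /ss big1 ?sqrtr0 // => i _; rewrite big_nil. Qed.

Lemma opset0 n (T : 'M[lincomb R]_n) : opset T 0.
Proof.
have [H1 H2] := zero_vec_supp T.
by exists (fun _ _ => 0), [::], [::]; split => //; rewrite l2norm_nil ?ler01.
Qed.

Lemma aset0 n (T : 'M[lincomb R]_n) : aset T 0.
Proof.
have [H1 H2] := zero_vec_supp T.
by exists (fun _ _ => 0), [::], [::]; split => //; rewrite l2norm_nil ?ler01.
Qed.

Lemma bset0 n (T : 'M[lincomb R]_n) : bset T 0.
Proof.
exists (fun _ => 0), [::]; split.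
- by rewrite big1 ?sqrtr0 ?ler01 // => i _; rewrite ComplexField.Normc.normc0 expr0n.
- move=> i y _; rewrite act_expand big1 // => j _; rewrite big1 // => p _.
  by rewrite /vec_delta1; case: ifP => _; rewrite mulr0.
- by rewrite l2norm_nil.
Qed.

Lemma opset_ub n (T : 'M[lincomb R]_n) : has_ubound (opset T).
Proof.
have [B HB] := ub_crude T.
exists B; move=> r [q [s [s' [Hs Hs' H1 ->]]]]. have := HB q s s' Hs H1. exact.
Qed.

Lemma aset_sub n (T : 'M[lincomb R]_n) : aset T `<=` opset T.
Proof. by move=> r [q [s [s' [_ Hs Hs' H1 ->]]]]; exists q, s, s'. Qed.

Lemma aset_ub n (T : 'M[lincomb R]_n) : has_ubound (aset T).
Proof.
case: (opset_ub T) => B HB; exists B; move=> r Hr; apply: HB; exact: aset_sub.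
Qed.

Lemma delta1_supp n (b : 'I_n -> C) : supported (vec_delta1 b) [:: oneFG].
Proof. by move=> i y; rewrite mem_seq1 /vec_delta1 => /negbTE ->. Qed.

Lemma delta1_ss n (b : 'I_n -> C) : ss (vec_delta1 b) (undup [:: oneFG]) = \sum_(i < n) nc (b i) ^+ 2.
Proof. by rewrite /ss /=; apply: eq_bigr => i _; rewrite big_seq1 /vec_delta1 eqxx. Qed.

Lemma bset_ub n (T : 'M[lincomb R]_n) : has_ubound (bset T).
Proof.
have [B HB] := ub_crude (mx_adj T).
exists B; move=> r [b [s' [H1 Hs' ->]]]; apply: HB (delta1_supp b) _.
by rewrite l2normE delta1_ss.
Qed.

Lemma opset_le n (T : 'M[lincomb R]_n) r : opset T r -> r <= opnorm T.
Proof. by move=> H; apply: ub_le_sup (opset_ub T) _ H. Qed.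
Lemma aset_le n (T : 'M[lincomb R]_n) r : aset T r -> r <= aT T.
Proof. by move=> H; apply: ub_le_sup (aset_ub T) _ H. Qed.
Lemma bset_le n (T : 'M[lincomb R]_n) r : bset T r -> r <= bT T.
Proof. by move=> H; apply: ub_le_sup (bset_ub T) _ H. Qed.

Lemma aT_ge0 n (T : 'M[lincomb R]_n) : 0 <= aT T.
Proof. exact: aset_le (aset0 T). Qed.
Lemma bT_ge0 n (T : 'M[lincomb R]_n) : 0 <= bT T.
Proof. exact: bset_le (bset0 T). Qed.
Lemma opnorm_ge0 n (T : 'M[lincomb R]_n) : 0 <= opnorm T.
Proof. exact: opset_le (opset0 T). Qed.

Lemma l2norm_ge0 n (q : 'I_n -> FG -> C) s : 0 <= l2norm q s.
Proof. exact: sqrtr_ge0. Qed.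

Lemma l2norm_scale n k (q : 'I_n -> FG -> C) s : 0 <= k -> l2norm (sc k q) s = k * l2norm q s.
Proof. by move=> k0; rewrite !l2normE ss_scale sqrt_scale. Qed.

Lemma l2norm_act_scale n (T : 'M[lincomb R]_n) k q s : 0 <= k ->
  l2norm (mx_act T (sc k q)) s = k * l2norm (mx_act T q) s.
Proof.
move=> k0; rewrite -l2norm_scale // !l2normE /ss; congr (Num.sqrt _).
by apply: eq_bigr => i _; apply: eq_bigr => y _; rewrite act_scale.
Qed.

Lemma supported_act_scale n (T : 'M[lincomb R]_n) k q s :
  supported (mx_act T q) s -> supported (mx_act T (sc k q)) s.
Proof. by move=> H i y yn; rewrite act_scale H ?mulr0. Qed.

Lemma op_scaled n (T : 'M[lincomb R]_n) q s s' :
  supported q s -> supported (mx_act T q) s' ->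
  l2norm (mx_act T q) s' <= opnorm T * l2norm q s.
Proof.
move=> H1 H2.
apply: (@scale_gen _ _ (@sc _ n) (fun q => l2norm q s) (fun q => l2norm (mx_act T q) s')
  (fun q => supported q s /\ supported (mx_act T q) s') _ _ _ _ _ _ q (conj H1 H2)).
- by move=> x; apply: l2norm_ge0.
- by move=> k x kp; rewrite l2norm_scale // ltW.
- by move=> k x kp; rewrite l2norm_act_scale // ltW.
- by move=> k x kp [P1 P2]; split; [apply: supported_scale|apply: supported_act_scale].
- by move=> x [P1 P2] Hx; apply: opset_le; exists x, s, s'.
Qed.

Lemma a_scaled n (T : 'M[lincomb R]_n) q s s' :
  all inFalpha s -> supported q s -> supported (mx_act T q) s' ->
  l2norm (mx_act T q) s' <= aT T * l2norm q s.
Proof.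
move=> H0 H1 H2.
apply: (@scale_gen _ _ (@sc _ n) (fun q => l2norm q s) (fun q => l2norm (mx_act T q) s')
  (fun q => supported q s /\ supported (mx_act T q) s') _ _ _ _ _ _ q (conj H1 H2)).
- by move=> x; apply: l2norm_ge0.
- by move=> k x kp; rewrite l2norm_scale // ltW.
- by move=> k x kp; rewrite l2norm_act_scale // ltW.
- by move=> k x kp [P1 P2]; split; [apply: supported_scale|apply: supported_act_scale].
- by move=> x [P1 P2] Hx; apply: aset_le; exists x, s, s'.
Qed.

Definition scbv n (k : R) (b : 'I_n -> C) : 'I_n -> C := fun i => (k%:C)%C * b i.
Definition bnrm n (b : 'I_n -> C) : R := Num.sqrt (\sum_(i < n) nc (b i) ^+ 2).

Lemma delta1_scale n (T : 'M[lincomb R]_n) k b i y :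
  mx_act (mx_adj T) (vec_delta1 (scbv k b)) i y = (k%:C)%C * mx_act (mx_adj T) (vec_delta1 b) i y.
Proof.
rewrite -act_scale; rewrite !act_expand; apply: eq_bigr => j _; apply: eq_bigr => p _.
by rewrite /vec_delta1 /sc /scbv; case: ifP => _; rewrite ?mulr0.
Qed.

Lemma b_scaled n (T : 'M[lincomb R]_n) b s' :
  supported (mx_act (mx_adj T) (vec_delta1 b)) s' ->
  l2norm (mx_act (mx_adj T) (vec_delta1 b)) s' <= bT T * bnrm b.
Proof.
move=> H2.
have := (@scale_gen _ _ (@scbv n) (@bnrm n) (fun b => l2norm (mx_act (mx_adj T) (vec_delta1 b)) s')
  (fun b => supported (mx_act (mx_adj T) (vec_delta1 b)) s') (bT T)); apply => //.
- by move=> x; apply: sqrtr_ge0.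
- move=> k x kp; rewrite /bnrm -sqrt_scale ?ltW // mulr_sumr; congr (Num.sqrt _).
  by apply: eq_bigr => i _; rewrite /scbv nc_scale.
- move=> k x kp; rewrite -l2norm_scale ?ltW // !l2normE /ss; congr (Num.sqrt _).
  by apply: eq_bigr => i _; apply: eq_bigr => y _; rewrite delta1_scale.
- by move=> k x kp P i y yn; rewrite delta1_scale P ?mulr0.
- by move=> x P Hx; apply: bset_le; exists x, s'.
Qed.

End Sets.
Section Pair.
Variable R : realType.
Local Notation C := (R[i]).
Local Notation nc := (@ComplexField.Normc.normc R).

Definition eta n (T : 'M[lincomb R]_n) (b : 'I_n -> C) := mx_act (mx_adj T) (vec_delta1 b).

Lemma eta_expand n (T : 'M[lincomb R]_n) b j y :
  eta T b j y = \sum_(i < n) \sum_(p <- T i j) ((p.1)^*)%C * (if y == invFG p.2 then b i else 0).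
Proof.
rewrite /eta act_expand; apply: eq_bigr => i _.
rewrite /mx_adj mxE big_map; apply: eq_bigr => p _ /=.
by rewrite /vec_delta1 invFGK mulFG_eq1.
Qed.

Lemma eta_conj n (T : 'M[lincomb R]_n) b j y :
  ((eta T b j y)^*)%C = \sum_(i < n) \sum_(p <- T i j) p.1 * (if y == invFG p.2 then ((b i)^*)%C else 0).
Proof.
rewrite eta_expand rmorph_sum; apply: eq_bigr => i _.
rewrite rmorph_sum; apply: eq_bigr => p _.
rewrite rmorphM /= conjcK; case: ifP => _ //; by rewrite rmorph0.
Qed.

Lemma eta_supp n (T : 'M[lincomb R]_n) b (Y : seq FG) :
  (forall p, p \in terms T -> invFG p.2 \in Y) -> supported (eta T b) Y.
Proof.
move=> HY j y yn; rewrite eta_expand big1 // => i _; rewrite big1_seq // => p /andP [_ pT].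
case: eqP => [E|_]; last by rewrite mulr0.
by move: yn; rewrite E HY // (mem_terms pT).
Qed.

Lemma pair_eq n (T : 'M[lincomb R]_n) (b : 'I_n -> C) (r : 'I_n -> FG -> C) (Y : seq FG) :
  uniq Y -> (forall p, p \in terms T -> invFG p.2 \in Y) ->
  \sum_(y <- Y) \sum_(j < n) r j y * ((eta T b j y)^*)%C =
  \sum_(i < n) ((b i)^*)%C * \sum_(j < n) \sum_(p <- T i j) p.1 * r j (invFG p.2).
Proof.
move=> UY HY.
transitivity (\sum_(y <- Y) \sum_(j < n) \sum_(i < n) \sum_(p <- T i j)
   (if y == invFG p.2 then r j y * p.1 * ((b i)^*)%C else 0)).
  apply: eq_bigr => y _; apply: eq_bigr => j _; rewrite eta_conj mulr_sumr.
  apply: eq_bigr => i _; rewrite mulr_sumr; apply: eq_bigr => p _.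
  case: ifP => _. by rewrite mulrA. by rewrite !mulr0.
rewrite exchange_big /=.
transitivity (\sum_(j < n) \sum_(i < n) \sum_(p <- T i j) \sum_(y <- Y)
   (if y == invFG p.2 then r j y * p.1 * ((b i)^*)%C else 0)).
  apply: eq_bigr => j _; rewrite exchange_big; apply: eq_bigr => i _.
  by rewrite exchange_big.
rewrite exchange_big /=; apply: eq_bigr => i _.
rewrite mulr_sumr; apply: eq_bigr => j _; rewrite mulr_sumr; apply: eq_big_seq => p pT.
rewrite (sum_pred1 (fun y => r j y * p.1 * ((b i)^*)%C)) //; last first.
  by apply: HY; apply: (mem_terms (i := i) (j := j)).
ring.
Qed.

End Pair.
Local Open Scope classical_set_scope.
Local Open Scope ring_scope.
Section PairBound.
Variable R : realType.
Local Notation C := (R[i]).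
Local Notation nc := (@ComplexField.Normc.normc R).

Lemma sq_le_lin (X c : R) : 0 <= X -> 0 <= c -> X ^+ 2 <= c * X -> X <= c.
Proof.
move=> X0 c0 H; have [->//|Xnz] := eqVneq X 0.
have Xp : 0 < X by rewrite lt_def Xnz X0.
by rewrite -(ler_pM2r Xp) -expr2.
Qed.

Lemma nc_Rsum (L : seq FG) n (F : 'I_n -> FG -> R) : (forall i y, 0 <= F i y) ->
  nc ((\sum_(y <- L) \sum_(i < n) F i y)%:C)%C = \sum_(y <- L) \sum_(i < n) F i y.
Proof.
move=> F0; rewrite nc_real ger0_norm //.
by apply: sumr_ge0 => y _; apply: sumr_ge0 => i _.
Qed.

Lemma pair_bound n (T : 'M[lincomb R]_n) (b : 'I_n -> C) (r : 'I_n -> FG -> C) (Y : seq FG) :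
  uniq Y -> (forall p, p \in terms T -> invFG p.2 \in Y) ->
  nc (\sum_(i < n) ((b i)^*)%C * \sum_(j < n) \sum_(p <- T i j) p.1 * r j (invFG p.2))
  <= Num.sqrt (ss r Y) * Num.sqrt (ss (eta T b) Y).
Proof.
move=> UY HY; rewrite -(pair_eq b r UY HY).
apply: le_trans (nc_sum _ _) _.
apply: le_trans (_ : \sum_(y <- Y) \sum_(j < n) nc (r j y) * nc (eta T b j y) <= _).
  apply: ler_sum => y _; apply: le_trans (nc_sum _ _) _; apply: ler_sum => j _.
  by rewrite ComplexField.Normc.normcM nc_conj.
rewrite exchange_big /=.
exact: (CS2 Y (fun j y => nc (r j y)) (fun j y => nc (eta T b j y))).
Qed.

Definition Yl n (T : 'M[lincomb R]_n) : seq FG := undup [seq invFG p.2 | p <- terms T].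

Lemma Yl_uniq n (T : 'M[lincomb R]_n) : uniq (Yl T).
Proof. exact: undup_uniq. Qed.

Lemma Yl_mem n (T : 'M[lincomb R]_n) p : p \in terms T -> invFG p.2 \in Yl T.
Proof. by move=> H; rewrite mem_undup; apply: map_f. Qed.

Lemma supported_sub n (q : 'I_n -> FG -> C) L L' : supported q L -> {subset L <= L'} -> supported q L'.
Proof. by move=> H S i y yn; apply: H; apply: contra yn; apply: S. Qed.

Lemma b_le_op n (T : 'M[lincomb R]_n) : bT T <= opnorm T.
Proof.
rewrite bTE; apply: ge_sup; first by exists 0; apply: bset0.
move=> r [b [s' [Hb Hs' ->]]].
set Y := Yl T.
have HY := @Yl_mem n T.
have Se : supported (eta T b) Y := eta_supp b HY.
rewrite /= -/(eta T b) l2normE (ss_supp Hs' Se) (undup_id (Yl_uniq T)).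
set X := Num.sqrt (ss (eta T b) Y).
apply: sq_le_lin; [exact: sqrtr_ge0 | exact: opnorm_ge0 |].
have E := pair_eq b (eta T b) (Yl_uniq T) HY.
have -> : X ^+ 2 = nc (\sum_(y <- Y) \sum_(j < n) eta T b j y * ((eta T b j y)^*)%C).
  rewrite sqr_sqrtr ?ss_ge0 //.
  have -> : \sum_(y <- Y) \sum_(j < n) eta T b j y * ((eta T b j y)^*)%C =
           ((\sum_(y <- Y) \sum_(j < n) nc (eta T b j y) ^+ 2)%:C)%C.
    rewrite rmorph_sum; apply: eq_bigr => y _; rewrite rmorph_sum; apply: eq_bigr => j _.
    exact: mul_conj.
  by rewrite nc_Rsum ?ssT // => i y; apply: sqr_ge0.
rewrite E.
set U := oneFG :: suppT T Y.
have HTe : supported (mx_act T (eta T b)) U.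
  move=> i y yn; apply: (supp_act (T := T) Se); apply: contra yn => H; by rewrite inE H orbT.
have Hop := op_scaled Se HTe.
rewrite /l2norm -/(l2norm (eta T b) Y) l2normE (undup_id (Yl_uniq T)) -/X in Hop.
apply: le_trans (_ : bnrm b * l2norm (mx_act T (eta T b)) U <= _); last first.
  apply: le_trans (_ : 1 * l2norm (mx_act T (eta T b)) U <= _).
    by apply: ler_wpM2r => //; apply: l2norm_ge0.
  by rewrite mul1r.
apply: le_trans (nc_sum _ _) _.
apply: le_trans (_ : \sum_(i < n) nc (b i) * nc (mx_act T (eta T b) i oneFG) <= _).
  apply: ler_sum => i _; rewrite ComplexField.Normc.normcM nc_conj; apply: ler_wpM2l; first exact: nc_ge0.
  suff -> : mx_act T (eta T b) i oneFG = \sum_(j < n) \sum_(p <- T i j) p.1 * eta T b j (invFG p.2) by [].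
  by rewrite act_expand; apply: eq_bigr => j _; apply: eq_bigr => p _; rewrite mulFG1.
apply: le_trans (CS (index_enum 'I_n) (fun i => nc (b i)) (fun i => nc (mx_act T (eta T b) i oneFG))) _.
apply: ler_wpM2l; first exact: sqrtr_ge0.
rewrite l2normE ler_sqrt ?ss_ge0 //.
apply: ler_sum => i _.
have := @sum_sub R FG [:: oneFG] (undup U) (fun y => nc (mx_act T (eta T b) i y) ^+ 2) isT (undup_uniq _).
rewrite big_seq1; apply.
- by move=> y; rewrite mem_seq1 mem_undup => /eqP ->; rewrite mem_head.
- by move=> y; apply: sqr_ge0.
Qed.

End PairBound.
Local Open Scope classical_set_scope.
Local Open Scope ring_scope.
Section CBound.
Variable R : realType.
Local Notation C := (R[i]).
Local Notation nc := (@ComplexField.Normc.normc R).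

Definition Nv n (T : 'M[lincomb R]_n) (q : 'I_n -> FG -> C) : 'I_n -> FG -> C := fun i g =>
  \sum_(j < n) \sum_(p <- T i j)
     (if ohead (sval g) == ohead (sval p.2) then p.1 * q j (mulFG (invFG p.2) g) else 0).
Definition Cv n (T : 'M[lincomb R]_n) (q : 'I_n -> FG -> C) : 'I_n -> FG -> C := fun i g =>
  \sum_(j < n) \sum_(p <- T i j)
     (if ohead (sval g) == ohead (sval p.2) then 0 else p.1 * q j (mulFG (invFG p.2) g)).

Lemma act_split n (T : 'M[lincomb R]_n) q i g : mx_act T q i g = Nv T q i g + Cv T q i g.
Proof.
rewrite act_expand /Nv /Cv -big_split /=; apply: eq_bigr => j _.
rewrite -big_split /=; apply: eq_bigr => p _.
by case: ifP; rewrite ?addr0 ?add0r.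
Qed.

Definition rC n (q : 'I_n -> FG -> C) (g : FG) : 'I_n -> FG -> C := fun j y =>
  if shapeC y g then q j (mulFG y g) else 0.

Lemma C_point n (T : 'M[lincomb R]_n) (hT : forall i j, in_LK (T i j)) q g :
  \sum_(i < n) nc (Cv T q i g) ^+ 2 <= bT T ^+ 2 * ss (rC q g) (Yl T).
Proof.
set b := fun i => Cv T q i g.
have E : \sum_(i < n) ((b i)^*)%C * \sum_(j < n) \sum_(p <- T i j) p.1 * rC q g j (invFG p.2)
         = ((\sum_(i < n) nc (b i) ^+ 2)%:C)%C.
  rewrite rmorph_sum; apply: eq_bigr => i _.
  have -> : \sum_(j < n) \sum_(p <- T i j) p.1 * rC q g j (invFG p.2) = b i.
    apply: eq_bigr => j _; apply: eq_big_seq => p pT.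
    rewrite /rC (inK_shapeC _ (hT i j p pT)).
    by case: (ohead (sval g) == ohead (sval p.2)) => /=; rewrite ?mulr0.
  by rewrite mulrC mul_conj.
have Hpb := pair_bound b (rC q g) (Yl_uniq T) (@Yl_mem _ n T).
rewrite E nc_real ger0_norm in Hpb; last by apply: sumr_ge0 => i _; apply: sqr_ge0.
have Se : supported (eta T b) (Yl T) := eta_supp b (@Yl_mem _ n T).
have Hb := b_scaled Se.
rewrite l2normE (undup_id (Yl_uniq T)) in Hb.
set Bn := bnrm b.
have Bn0 : 0 <= Bn by apply: sqrtr_ge0.
have SB : Bn ^+ 2 = \sum_(i < n) nc (b i) ^+ 2.
  by rewrite sqr_sqrtr //; apply: sumr_ge0 => i _; apply: sqr_ge0.
have H : Bn <= bT T * Num.sqrt (ss (rC q g) (Yl T)).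
  apply: sq_le_lin => //; first by apply: mulr_ge0; [exact: bT_ge0|exact: sqrtr_ge0].
  rewrite SB; apply: le_trans Hpb _.
  rewrite [bT T * _]mulrC -mulrA; apply: ler_wpM2l; first exact: sqrtr_ge0.
  exact: Hb.
rewrite -SB.
have -> : bT T ^+ 2 * ss (rC q g) (Yl T) = (bT T * Num.sqrt (ss (rC q g) (Yl T))) ^+ 2.
  by rewrite exprMn sqr_sqrtr // ss_ge0.
by rewrite ler_sqr ?nnegrE // mulr_ge0 // ?bT_ge0 ?sqrtr_ge0.
Qed.

End CBound.
Local Open Scope classical_set_scope.
Local Open Scope ring_scope.
Section CTotal.
Variable R : realType.
Local Notation C := (R[i]).
Local Notation nc := (@ComplexField.Normc.normc R).

Lemma sum_nc2_eq0 n (v : 'I_n -> C) : \sum_(i < n) nc (v i) ^+ 2 != 0 -> exists i, v i != 0.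
Proof.
move=> H; apply/existsP; apply: contraR H; rewrite negb_exists => /forallP Hv.
by rewrite big1 // => i _; move: (Hv i); rewrite negbK => /eqP ->; rewrite ComplexField.Normc.normc0 expr0n.
Qed.

Lemma pair_uniq (A B : eqType) (L : seq A) (M : seq B) : uniq L -> uniq M ->
  uniq [seq (a, b) | a <- L, b <- M].
Proof. by move=> UL UM; apply: allpairs_uniq => // -[a b] [a' b'] _ _ /= [-> ->]. Qed.

Lemma C_total n (T : 'M[lincomb R]_n) (hT : forall i j, in_LK (T i j)) q s U :
  supported q s -> uniq U -> ss (Cv T q) U <= bT T ^+ 2 * ss q (undup s).
Proof.
move=> Hs UU; rewrite ssT.
apply: le_trans (_ : \sum_(g <- U) bT T ^+ 2 * ss (rC q g) (Yl T) <= _).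
  by apply: ler_sum => g _; apply: C_point.
rewrite -mulr_sumr; apply: ler_wpM2l; first exact: sqr_ge0.
under eq_bigr => g _ do rewrite ssT.
rewrite -(big_allpairs (F := fun gy => \sum_(i < n) nc (rC q gy.1 i gy.2) ^+ 2)) ssT.
apply: (sum_inj (phi := fun gy => mulFG gy.2 gy.1)).
- by apply: pair_uniq => //; apply: Yl_uniq.
- exact: undup_uniq.
- by move=> a; apply: sumr_ge0 => i _; apply: sqr_ge0.
- by move=> a; apply: sumr_ge0 => i _; apply: sqr_ge0.
- move=> [g y] _ /= Hnz; case: (sum_nc2_eq0 Hnz) => i; rewrite /rC; case: ifP => [Sh Hq|_]; last by rewrite eqxx.
  split.
    rewrite mem_undup; case E: (mulFG y g \in s) => //.
    by move: Hq; rewrite Hs ?E ?eqxx.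
  by apply: ler_sum => j _; rewrite ?Sh.
- move=> [g y] [g' y'] _ _ /= Hnz Hnz'.
  case: (sum_nc2_eq0 Hnz) => i; rewrite /rC; case: ifP => [Sh _|_]; last by rewrite eqxx.
  case: (sum_nc2_eq0 Hnz') => i'; rewrite /rC; case: ifP => [Sh' _|_]; last by rewrite eqxx.
  move=> E.
  have [E1 E2] := shapeC_inj Sh Sh' E. by rewrite E1 E2.
Qed.

End CTotal.
Local Open Scope classical_set_scope.
Local Open Scope ring_scope.
Section NTotal.
Variable R : realType.
Local Notation C := (R[i]).
Local Notation nc := (@ComplexField.Normc.normc R).

Definition qt n (q : 'I_n -> FG -> C) (t : FG) : 'I_n -> FG -> C := fun j v =>
  if inFalpha v then q j (mulFG v t) else 0.
Definition Vs (s : seq FG) := undup (map preFG s).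
Definition Ts (s : seq FG) := undup (map tlFG s).

Lemma inK_head x : inK x -> exists j, ohead (sval x) = Some (eL j).
Proof. by case/inK_word => j [u [_ _ -> _]]; exists j. Qed.

Lemma pair_fst (A B : eqType) (L : seq A) (M : seq B) a b :
  (a, b) \in [seq (x, y) | x <- L, y <- M] -> a \in L /\ b \in M.
Proof. by case/allpairsP => -[x y] [/= H1 H2 [-> ->]]. Qed.

Lemma Nv_eq n (T : 'M[lincomb R]_n) (hT : forall i j, in_LK (T i j)) q i g k :
  ohead (sval g) = Some (eL k) -> Nv T q i g = mx_act T (qt q (tN g)) i (hN g).
Proof.
move=> Hg; rewrite act_expand /Nv; apply: eq_bigr => j _; apply: eq_big_seq => p pT.
have Kp := hT i j p pT.
rewrite /qt (alpha_inv_hN Kp Hg) mulFGA hN_tN_mul.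
by case: (ohead (sval g) == ohead (sval p.2)); rewrite ?mulr0.
Qed.

Lemma Nv_nz n (T : 'M[lincomb R]_n) (hT : forall i j, in_LK (T i j)) q i g :
  Nv T q i g != 0 -> exists k, ohead (sval g) = Some (eL k).
Proof.
apply: contraNP => H; apply/eqP; rewrite /Nv big1 // => j _; rewrite big1_seq // => p /andP [_ pT].
case: (inK_head (hT i j p pT)) => k Hk; rewrite Hk.
case: eqP => // E; by case: H; exists k.
Qed.

Lemma qt_zero n (q : 'I_n -> FG -> C) s t : supported q s -> tshape (sval t) -> t \notin Ts s ->
  forall j v, qt q t j v = 0.
Proof.
move=> Hs Ht tn j v; rewrite /qt; case: ifP => // Hv.
apply: Hs; apply: contra tn => H.
rewrite mem_undup; apply/mapP; exists (mulFG v t) => //.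
by case: (mul_alpha_tail Hv Ht).
Qed.

Lemma qt_supp n (q : 'I_n -> FG -> C) s t : supported q s -> tshape (sval t) -> supported (qt q t) (Vs s).
Proof.
move=> Hs Ht j v vn; rewrite /qt; case: ifP => // Hv.
apply: Hs; apply: contra vn => H.
rewrite mem_undup; apply/mapP; exists (mulFG v t) => //.
by case: (mul_alpha_tail Hv Ht).
Qed.

Lemma all_alpha_Vs s : all inFalpha (Vs s).
Proof.
apply/allP => v; rewrite mem_undup => /mapP [y _ ->].
exact: all_pre.
Qed.

Lemma Ts_tshape s t : t \in Ts s -> tshape (sval t).
Proof. by rewrite mem_undup => /mapP [y _ ->]; apply: tshape_tlFG. Qed.

Lemma act_zero n (T : 'M[lincomb R]_n) (q : 'I_n -> FG -> C) :
  (forall j v, q j v = 0) -> forall i g, mx_act T q i g = 0.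
Proof.
move=> H i g; rewrite act_expand big1 // => j _; rewrite big1 // => p _.
by rewrite H mulr0.
Qed.

Lemma sq_le (x y c : R) : 0 <= x -> 0 <= c -> x <= c * y -> x ^+ 2 <= c ^+ 2 * y ^+ 2.
Proof.
move=> x0 c0 H; rewrite -exprMn ler_sqr ?nnegrE //.
exact: le_trans H.
Qed.

Lemma N_total n (T : 'M[lincomb R]_n) (hT : forall i j, in_LK (T i j)) q s U :
  supported q s -> uniq U -> ss (Nv T q) U <= aT T ^+ 2 * ss q (undup s).
Proof.
move=> Hs UU.
set H := undup (suppT T (Vs s)).
apply: le_trans (_ : \sum_(th <- [seq (t, h) | t <- Ts s, h <- H])
    \sum_(i < n) nc (mx_act T (qt q th.1) i th.2) ^+ 2 <= _).
  rewrite ssT; apply: (sum_inj (phi := fun g => (tN g, hN g))) => //.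
  - by apply: pair_uniq; apply: undup_uniq.
  - by move=> a; apply: sumr_ge0 => i _; apply: sqr_ge0.
  - by move=> a; apply: sumr_ge0 => i _; apply: sqr_ge0.
  - move=> g _ Hnz.
    have [i Hi] := sum_nc2_eq0 Hnz.
    have [k Hk] := Nv_nz hT Hi.
    have E : \sum_(i < n) nc (Nv T q i g) ^+ 2 =
             \sum_(i < n) nc (mx_act T (qt q (tN g)) i (hN g)) ^+ 2.
      by apply: eq_bigr => i' _; rewrite (Nv_eq hT q i' Hk).
    rewrite E in Hnz *; split => //.
    have [i' Hi'] := sum_nc2_eq0 Hnz.
    apply: (allpairs_f (fun t h => (t, h))).
      apply: contraR Hi' => tn.
      by rewrite (act_zero T (qt_zero Hs (tshape_tN g) tn)).
    apply: contraR Hi' => hn.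
    rewrite (supp_act (T := T) (qt_supp Hs (tshape_tN g))) //.
    by apply: contra hn; rewrite mem_undup.
  - move=> g g' _ _ _ _ E.
    have E1 : tN g = tN g' := congr1 fst E.
    have E2 : hN g = hN g' := congr1 snd E.
    by rewrite -(hN_tN_mul g) -(hN_tN_mul g') E1 E2.
rewrite big_allpairs /=.
apply: le_trans (_ : \sum_(t <- Ts s) aT T ^+ 2 * ss (qt q t) (Vs s) <= _).
  rewrite big_seq [X in _ <= X]big_seq; apply: ler_sum => t tT.
  have Ht := Ts_tshape tT.
  have Sq := qt_supp Hs Ht.
  have STq : supported (mx_act T (qt q t)) H.
    move=> i h hn; apply: (supp_act (T := T) Sq); by apply: contra hn; rewrite mem_undup.
  have := a_scaled (all_alpha_Vs s) Sq STq.
  rewrite !l2normE (undup_id (undup_uniq _)) => Ha.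
  rewrite exchange_big /= -/(ss (mx_act T (qt q t)) H).
  rewrite -(sqr_sqrtr (ss_ge0 (mx_act T (qt q t)) H)) -[ss (qt q t) _](sqr_sqrtr (ss_ge0 _ _)).
  rewrite /Vs (undup_id (undup_uniq _)) in Ha.
  apply: sq_le => //; [exact: sqrtr_ge0 | exact: aT_ge0].
rewrite -mulr_sumr; apply: ler_wpM2l; first exact: sqr_ge0.
under eq_bigr => t _ do rewrite ssT.
rewrite -(big_allpairs (F := fun tv => \sum_(j < n) nc (qt q tv.1 j tv.2) ^+ 2)) ssT.
apply: (sum_inj (phi := fun tv => mulFG tv.2 tv.1)).
- by apply: pair_uniq; apply: undup_uniq.
- exact: undup_uniq.
- by move=> a; apply: sumr_ge0 => i _; apply: sqr_ge0.
- by move=> a; apply: sumr_ge0 => i _; apply: sqr_ge0.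
- move=> [t v] _ /= Hnz; have [j Hj] := sum_nc2_eq0 Hnz.
  move: Hj; rewrite /qt; case: ifP => [Hv Hq|_]; last by rewrite eqxx.
  split.
    rewrite mem_undup; case E: (mulFG v t \in s) => //.
    by move: Hq; rewrite Hs ?E ?eqxx.
  by apply: ler_sum => j' _; rewrite ?Hv.
- move=> [t v] [t' v'] /pair_fst [tT _] /pair_fst [tT' _] /= Hnz Hnz' E.
  have [j Hj] := sum_nc2_eq0 Hnz; have [j' Hj'] := sum_nc2_eq0 Hnz'.
  move: Hj Hj'; rewrite /qt; case: ifP => [Hv _|_]; last by rewrite eqxx.
  case: ifP => [Hv' _|_]; last by rewrite eqxx.
  have [P1 T1] := mul_alpha_tail Hv (Ts_tshape tT).
  have [P2 T2] := mul_alpha_tail Hv' (Ts_tshape tT').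
  have Ev : v = v' by rewrite -P1 /= E P2.
  have Et : t = t' by rewrite -T1 /= E T2.
  by rewrite Ev Et.
Qed.

End NTotal.
Local Open Scope classical_set_scope.
Local Open Scope ring_scope.

Lemma a_le_op (R : realType) n (T : 'M[lincomb R]_n) : aT T <= opnorm T.
Proof.
rewrite aTE; apply: ge_sup; first by exists 0; apply: aset0.
by move=> r Hr; apply: opset_le; apply: aset_sub.
Qed.

Lemma sqrt_bound (R : realType) (X Y c : R) : 0 <= c -> 0 <= Y -> X <= c ^+ 2 * Y ->
  Num.sqrt X <= c * Num.sqrt Y.
Proof.
move=> c0 Y0 H; rewrite -sqrt_scale // ler_sqrt //.
by apply: mulr_ge0 => //; apply: sqr_ge0.
Qed.

Lemma op_le_ab (R : realType) n (T : 'M[lincomb R]_n) (hT : forall i j, in_LK (T i j)) :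
  opnorm T <= aT T + bT T.
Proof.
rewrite opnormE; apply: ge_sup; first by exists 0; apply: opset0.
move=> r [q [s [s' [Hs Hs' H1 ->]]]].
set U := s' ++ suppT T s.
have HU : supported (mx_act T q) U.
  by move=> i y yn; apply: Hs'; apply: contra yn; rewrite mem_cat => ->.
rewrite l2normE (ss_supp Hs' HU).
apply: le_trans (minkowski (undup U) (@act_split R n T q)) _.
have UU := undup_uniq U.
have HN := sqrt_bound (aT_ge0 T) (ss_ge0 q (undup s)) (N_total hT Hs UU).
have HC := sqrt_bound (bT_ge0 T) (ss_ge0 q (undup s)) (C_total hT Hs UU).
rewrite -l2normE in HN HC.
apply: le_trans (lerD HN HC) _.
rewrite -mulrDl -[X in _ <= X]mulr1; apply: ler_wpM2l => //.
by apply: addr_ge0; [apply: aT_ge0|apply: bT_ge0].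
Qed.

Local Close Scope classical_set_scope.
Unset Implicit Arguments.

Theorem proposition8 (R : realType) (n : nat) (hn : (0 < n)%N)
  (T : 'M[lincomb R]_n) (hT : forall i j, in_LK (T i j)) :
  Num.max (aT T) (bT T) <= opnorm T <= aT T + bT T.
Proof.
apply/andP; split; last exact: op_le_ab.
by rewrite ge_max a_le_op b_le_op.
Qed.
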